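(* Every univariate real polynomial $p$ that is not identically zero is amenable as a function $p:\mathbb{R}\to\mathbb{R}$.
   Context: Relative distance on $\mathbb{R}$: $\mathrm{dist}(x,y)=0$ if $x=y=0$, $\mathrm{dist}(x,y)=|\log(y/x)|$ if $xy>0$, and $\mathrm{dist}(x,y)=\infty$ otherwise. For a real analytic function $f$ on an open set $\Omega\subseteq\mathbb{R}$, not identically zero, the condition number is $\kappa(f,x)=0$ if $x=0$, $\kappa(f,x)=\infty$ if $x\neq0$ and $f(x)=0$, and $\kappa(f,x)=|x|\,|f'(x)|/|f(x)|$ otherwise; $\mu(f,x)=1+\kappa(f,x)$. $f:\Omega\to\mathbb{R}$ is amenable if there is $C>0$ such that for every $x\in\Omega$ with $\kappa(f,x)<\infty$, the set $B_x=\{y\in\mathbb{R}:\mathrm{dist}(y,x)<1/(C\mu(f,x))\}$ is contained in $\Omega$ and $\mu(f,y)\leq C\mu(f,x)$ for all $y\in B_x$. *)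

(* Defs.v *)
From HB Require Import structures.
From mathcomp Require Import all_boot all_order all_algebra.
From mathcomp Require Import all_classical all_reals all_analysis.
Set Implicit Arguments. Unset Strict Implicit. Unset Printing Implicit Defensive.
Import Order.TTheory GRing.Theory Num.Theory.
Import numFieldNormedType.Exports.
Local Open Scope classical_set_scope.
Local Open Scope ring_scope.

Definition reldist {R : realType} (x y : R) : \bar R :=
  if (x == 0) && (y == 0) then 0%E
  else if 0 < x * y then (`|ln (y / x)|)%:E
  else +oo%E.

Definition kappa {R : realType} (f : R -> R) (x : R) : \bar R :=
  if x == 0 then 0%E
  else if f x == 0 then +oo%E
  else (`|x| * `|derive1 f x| / `|f x|)%:E.

Definition mu {R : realType} (f : R -> R) (x : R) : \bar R := (1 + kappa f x)%E.

Definition amenable {R : realType} (Omega : set R) (f : R -> R) : Prop :=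
  exists C : R, 0 < C /\
    forall x, Omega x -> (kappa f x < +oo)%E ->
      let Bx := [set y | (reldist y x < (1 / (C * fine (mu f x)))%:E)%E] in
      Bx `<=` Omega /\ forall y, Bx y -> (mu f y <= C%:E * mu f x)%E.

(* Main.v *)
Require Import Defs.
From HB Require Import structures.
From mathcomp Require Import all_boot all_order all_algebra.
From mathcomp Require Import all_classical all_reals all_analysis.
From mathcomp Require Import ring lra zify.
Import Order.TTheory GRing.Theory Num.Theory.
Import numFieldNormedType.Exports.
Local Open Scope classical_set_scope.
Local Open Scope ring_scope.
Lemma horner_upper (R : realType) (N : {poly R}) (e : nat) (z : R) :
  (size N <= e.+1)%N -> 1 <= `|z| ->
  `|N.[z]| <= (\sum_(i < size N) `|N`_i|) * `|z| ^+ e.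
Proof.
move=> hs hz; rewrite horner_coef mulr_suml.
apply: (le_trans (ler_norm_sum _ _ _)); apply: ler_sum => i _.
rewrite normrM normrX; apply: ler_wpM2l => //.
apply: ler_weXn2l => //.
by have := ltn_ord i; move: hs; clear; lia.
Qed.

Lemma horner_lower (R : realType) (E : {poly R}) (z : R) :
  E != 0 -> 1 <= `|z| ->
  2 * (\sum_(i < (size E).-1) `|E`_i|) / `|lead_coef E| <= `|z| ->
  `|lead_coef E| * `|z| ^+ (size E).-1 / 2 <= `|E.[z]|.
Proof.
move=> E0 hz hM.
have lc0 : 0 < `|lead_coef E| by rewrite normr_gt0 lead_coef_eq0.
have sE : size E = (size E).-1.+1 by rewrite prednK // size_poly_gt0.
set e := (size E).-1 in sE hM *.
set SE := \sum_(i < e) `|E`_i| in hM.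
have z0 : 0 < `|z| by apply: lt_le_trans hz.
set S := \sum_(i < e) E`_i * z ^+ i.
have hE : E.[z] = S + lead_coef E * z ^+ e.
  by rewrite horner_coef sE big_ord_recr /= lead_coefE.
have hS1 : `|z| * `|S| <= SE * `|z| ^+ e.
  rewrite /S /SE mulr_suml; apply: (le_trans (ler_wpM2l (ltW z0) (ler_norm_sum _ _ _))).
  rewrite mulr_sumr; apply: ler_sum => i _.
  rewrite normrM normrX mulrCA -exprS; apply: ler_wpM2l => //.
  by apply: ler_weXn2l => //; exact: ltn_ord.
have hSE : SE <= `|lead_coef E| * `|z| / 2.
  move: hM; rewrite ler_pdivrMr // => h; nra.
have hS : `|S| <= `|lead_coef E| * `|z| ^+ e / 2.
  rewrite -(ler_pM2l z0); apply: (le_trans hS1).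
  have : SE * `|z| ^+ e <= `|lead_coef E| * `|z| / 2 * `|z| ^+ e.
    by apply: ler_wpM2r => //; rewrite exprn_ge0.
  by move=> h; apply: (le_trans h); rewrite le_eqVlt; apply/orP; left; apply/eqP; field.
rewrite hE addrC; apply: le_trans (lerB_normD _ _).
rewrite normrM normrX.
lra.
Qed.

Lemma poly_large (R : realType) (N E : {poly R}) :
  E != 0 -> (size N <= size E)%N ->
  exists M K, 1 <= M /\ 0 < K /\ forall z, M <= `|z| -> `|N.[z]| <= K * `|E.[z]|.
Proof.
move=> E0 hs.
have lc0 : 0 < `|lead_coef E| by rewrite normr_gt0 lead_coef_eq0.
have sE : size E = (size E).-1.+1 by rewrite prednK // size_poly_gt0.
set SE := \sum_(i < (size E).-1) `|E`_i|.
set SN := \sum_(i < size N) `|N`_i|.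
have SE0 : 0 <= SE by apply: sumr_ge0.
have SN0 : 0 <= SN by apply: sumr_ge0.
exists (1 + 2 * SE / `|lead_coef E|), (2 * SN / `|lead_coef E| + 1).
split; first by rewrite lerDl divr_ge0 // mulr_ge0.
split; first by rewrite ltr_wpDl // divr_ge0 // mulr_ge0.
move=> z hz.
have h1 : 1 <= `|z| by apply: le_trans hz; rewrite lerDl divr_ge0 // mulr_ge0.
have h2 : 2 * SE / `|lead_coef E| <= `|z| by apply: le_trans hz; rewrite lerDr.
have hl := @horner_lower _ _ _ E0 h1 h2.
have hs' : (size N <= (size E).-1.+1)%N by rewrite -sE.
have hu := @horner_upper R N (size E).-1 z hs' h1.
apply: (le_trans hu).
set P := `|z| ^+ (size E).-1 in hl hu *.
have P0 : 0 <= P by rewrite exprn_ge0.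
have : SN * P = 2 * SN / `|lead_coef E| * (`|lead_coef E| * P / 2).
  by field; rewrite gt_eqF.
move=> ->.
have hk : 0 <= 2 * SN / `|lead_coef E| by rewrite divr_ge0 // mulr_ge0.
apply: (le_trans (ler_wpM2l hk hl)).
apply: ler_wpM2r => //; rewrite lerDl //.
Qed.

Lemma ratio_bound (R : realType) (N E D : {poly R}) :
  (forall z, 0 <= E.[z] <= D.[z]) -> (forall z, 0 < D.[z]) ->
  (size N <= size E)%N ->
  exists K, 0 < K /\ forall z, `|N.[z]| <= K * D.[z].
Proof.
move=> hED hD hs.
have [E0|E0] := eqVneq E 0.
  move: hs; rewrite E0 size_poly0 leqn0 size_poly_eq0 => /eqP ->.
  by exists 1; split => // z; rewrite horner0 normr0 mul1r ltW.
have [M [K1 [M1 [K10 hK1]]]] := @poly_large _ _ _ E0 hs.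
have MM : -M <= M by lra.
have cN' : continuous (fun z : R => `|N.[z]|).
  move=> x; apply: (@continuous_comp _ _ _ (horner N) Num.norm).
    exact: continuous_horner.
  exact: norm_continuous.
have [c1 _ hc1] := EVT_max MM (continuous_subspaceT cN').
have [c2 _ hc2] := EVT_min MM (continuous_subspaceT (@continuous_horner R D)).
have D2 := hD c2.
exists (K1 + `|N.[c1]| / D.[c2] + 1); split.
  by apply: (lt_le_trans K10); rewrite -addrA lerDl addr_ge0 // divr_ge0 // ltW.
move=> z.
have Dz := hD z.
have [hzM|hzM] := leP M `|z|.
  apply: (le_trans (hK1 z hzM)).
  have /andP[E0z EDz] := hED z.
  rewrite ger0_norm //.
  apply: (le_trans (ler_wpM2l (ltW K10) EDz)).
  apply: ler_wpM2r; first exact: ltW.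
  by rewrite -addrA lerDl addr_ge0 // divr_ge0 // ltW.
have zin : z \in `[-M, M].
  by rewrite in_itv /= -ler_norml ltW.
have h1 := hc1 z zin.
have h2 := hc2 z zin.
set Q := `|N.[c1]| / D.[c2].
have Q0 : 0 <= Q by rewrite divr_ge0 // ltW.
have hQ : `|N.[c1]| = Q * D.[c2] by rewrite /Q divfK // gt_eqF.
have h3 : Q * D.[c2] <= Q * D.[z] by apply: ler_wpM2l.
have h4 : 0 <= K1 * D.[z] by rewrite mulr_ge0 // ltW.
rewrite !mulrDl mul1r.
apply: (le_trans h1); rewrite hQ; apply: (le_trans h3).
rewrite addrAC; apply: ler_wpDl => //; apply: addr_ge0 => //; exact: ltW.
Qed.

Lemma log_close (R : realType) (x y d : R) : 0 < x * y ->
  `|ln (x / y)| < d -> d <= 1/2 ->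
  `|y - x| <= 2 * d * `|x| /\ `|y - x| <= 2 * d * `|y|.
Proof.
move=> xy hl hd.
have y0 : y != 0 by apply/eqP => y0; move: xy; rewrite y0 mulr0 ltxx.
set r := x / y.
have r0 : 0 < r.
  have -> : r = x * y / (y ^+ 2) by rewrite /r; field.
  by rewrite divr_gt0 // lt_def sqrf_eq0 y0 sqr_ge0.
have e1 : ln r <= r - 1.
  have := @le_ln1Dx R (r - 1); rewrite addrCA subrr addr0; apply; lra.
have e2 : - ln r <= r^-1 - 1.
  have := @le_ln1Dx R (r^-1 - 1); rewrite addrCA subrr addr0 lnV ?posrE //; apply.
  have : 0 < r^-1 by rewrite invr_gt0.
  lra.
have hL : - d < ln r < d by rewrite -ltr_norml.
have yx : y - x = y * (1 - r) by rewrite /r; field.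
have xr : `|x| = r * `|y|.
  by rewrite -(ger0_norm (ltW r0)) -normrM /r divfK.
clearbody r.
have key : `|1 - r| <= 2 * d /\ `|1 - r| <= 2 * d * r.
  have [r1|r1] := leP 1 r.
    rewrite ler0_norm; last lra.
    have e3 : - (r * ln r) <= 1 - r.
      have := ler_wpM2l (ltW r0) e2.
      by rewrite mulrBr mulfV ?gt_eqF // mulr1 mulrN.
    have e4 : r * ln r <= r * d by apply: ler_wpM2l; [exact: ltW| case/andP: hL => _ /ltW].
    have e6 := ler_wpM2l (ltW r0) hd.
    have e5 : r <= 2 by lra.
    have e7 : r * d <= 2 * d by apply: ler_wpM2r => //; lra.
    have d0 : 0 <= d by case/andP: hL => ? ?; lra.
    have e8 : 0 <= r * d by rewrite mulr_ge0 // ltW.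
    by split; clear -e3 e4 e7 e8 d0; lra.
  rewrite ger0_norm; last lra.
  split; nra.
rewrite yx normrM xr; case: key => k1 k2.
have hy : 0 <= `|y| by [].
split.
  have := ler_wpM2l hy k2; rewrite mulrC; move=> h; apply: (le_trans h).
  by rewrite le_eqVlt; apply/orP; left; apply/eqP; ring.
have := ler_wpM2l hy k1; rewrite mulrC; move=> h; apply: (le_trans h).
by rewrite le_eqVlt; apply/orP; left; apply/eqP; ring.
Qed.

Lemma root_a (R : realType) (p : {poly R}) (y : R) : p != 0 -> y != 0 ->
  root p y -> root (p %/ gcdp p ('X * p^`())) y.
Proof.
move=> p0 y0 rp; set d := gcdp p ('X * p^`()).
apply/negPn/negP => na.
have [m [q0 nq hp]] := multiplicity_XsubC p y.
rewrite p0 /= in nq.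
case: m hp => [|m1] hp.
  by move: rp; rewrite hp expr0 mulr1 (negbTE nq).
set L := 'X - y%:P.
have dd : d %| 'X * p^`() by apply: dvdp_gcdr.
have pad : p = (p %/ d) * d by rewrite divpK // dvdp_gcdl.
have Lp : L ^+ m1.+1 %| p by rewrite hp dvdp_mull.
have cop : coprimep (L ^+ m1.+1) (p %/ d).
  by apply: coprimep_expl; rewrite coprimep_sym coprimep_XsubC.
have Ld : L ^+ m1.+1 %| d by rewrite -(Gauss_dvdpr _ cop) -pad.
have LX : L ^+ m1.+1 %| 'X * p^`() by apply: dvdp_trans Ld dd.
have eq : 'X * p^`() = L ^+ m1 * ('X * (q0^`() * L + q0 *+ m1.+1)).
  rewrite hp derivM deriv_exp derivXsubC /= exprSr.
  rewrite /L -!mulrnAr; ring.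
move: LX; rewrite eq exprSr dvdp_mul2l; last first.
  by rewrite expf_neq0 // polyXsubC_eq0.
rewrite dvdp_XsubCl /root !hornerE subrr mulr0 add0r.
by rewrite hornerMn mulf_eq0 (negbTE y0) mulrn_eq0 /=; move: nq; rewrite /root; case: eqP.
Qed.

Lemma g_deriv (R : realType) (a b : {poly R}) (z : R) : 0 < (a*a + b*b).[z] ->
  is_derive z 1 (fun t => a.[t] * (Num.sqrt (a*a+b*b).[t])^-1)
    (b.[z] * (a^`() * b - a * b^`()).[z] / (Num.sqrt (a*a+b*b).[z]) ^+ 3).
Proof.
set D := a*a+b*b => Dz.
have s0 : 0 < Num.sqrt D.[z] by rewrite sqrtr_gt0.
have hs : is_derive z 1 (Num.sqrt \o horner D) ((2 * Num.sqrt D.[z])^-1 * D^`().[z]).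
  exact: (is_derive1_comp (is_derive1_sqrt Dz) (is_derive_poly D z)).
have hv := is_deriveV (f := Num.sqrt \o horner D) (lt0r_neq0 s0) hs.
have hm := is_deriveM (is_derive_poly a z) hv.
have ef : (fun t => a.[t] * (Num.sqrt D.[t])^-1) =
    (horner a * (fun y => ((Num.sqrt \o horner D) y)^-1)) by apply/funext.
rewrite ef; apply: (is_derive_eq hm).
have e : Num.sqrt D.[z] ^+ 2 = (a.[z] * a.[z] + b.[z] * b.[z]).
  by rewrite sqr_sqrtr ?ltW // /D !hornerE.
rewrite /=.
set s := Num.sqrt D.[z] in s0 e *.
clearbody s.
rewrite /D derivD !derivM !hornerE.
rewrite /GRing.scale /=.
have -> : s^-1 * a^`().[z] = a^`().[z] * (a.[z] * a.[z] + b.[z] * b.[z]) / s ^+ 3.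
  rewrite -e; field; exact: lt0r_neq0 s0.
field; exact: lt0r_neq0 s0.
Qed.

Lemma size_deriv_le (R : realType) (a : {poly R}) : (size a^`() <= (size a).-1)%N.
Proof.
have [->|a0] := eqVneq a 0; first by rewrite deriv0 size_poly0.
by have := lt_size_deriv a0; case: (size a) => //.
Qed.

Lemma size_N (R : realType) (a b : {poly R}) : a != 0 ->
  leq (size ('X * (a^`() * b - a * b^`())))
   (size (if (size b <= size a)%N then a * a else b * b)).
Proof.
move=> a0.
have f1 := size_deriv_le _ a.
have f2 := size_deriv_le _ b.
have f3 := size_polyMleq a^`() b.
have f4 := size_polyMleq a b^`().
have f5 := size_polyD (a^`() * b) (- (a * b^`())).
rewrite size_polyN in f5.
have f6 := size_polyMleq 'X (a^`() * b - a * b^`()).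
rewrite size_polyX in f6.
have f6' : (size ('X * (a^`() * b - a * b^`()))%R <= (2 + size (a^`() * b - a * b^`())%R).-1)%N := f6.
clear f6.
have f7 : size (a * a) = (size a + size a).-1 by rewrite size_mul.
have sa : (0 < size a)%N by rewrite size_poly_gt0.
set s1 := size (a^`() * b) in f3 f5.
set s2 := size (a * b^`()) in f4 f5.
set s3 := size (a^`() * b - a * b^`()) in f5 f6'.
set s4 := size ('X * (a^`() * b - a * b^`())) in f6' *.
set s5 := size a^`() in f1 f3.
set s6 := size b^`() in f2 f4.
case: ifP => hab.
  rewrite f7; lia.
have b0 : b != 0 by rewrite -size_poly_gt0; lia.
have f8 : size (b * b) = (size b + size b).-1 by rewrite size_mul.
rewrite f8; lia.
Qed.

Lemma sq_pos (R : realType) (x : R) : x != 0 -> 0 < x * x.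
Proof. by move=> x0; rewrite -expr2 lt_def sqrf_eq0 x0 sqr_ge0. Qed.

Lemma sq_ge0 (R : realType) (x : R) : 0 <= x * x.
Proof. by rewrite -expr2 sqr_ge0. Qed.

Lemma norm_le_sqrt (R : realType) (u v : R) : `|u| <= Num.sqrt (u * u + v * v).
Proof.
rewrite -sqrtr_sqr; apply: ler_wsqrtr; rewrite expr2 lerDl; exact: sq_ge0.
Qed.

Lemma mvt_rel (R : realType) (g dg : R -> R) (K d x y : R) :
  (forall z : R, is_derive z 1 g (dg z)) -> (forall z, `|z * dg z| <= K) ->
  0 < x * y -> `|y - x| <= 2 * d * `|x| -> `|y - x| <= 2 * d * `|y| ->
  0 <= d -> `|g y - g x| <= 2 * d * K.
Proof.
move=> hd hK.
wlog: x y / x <= y.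
  move=> W xy h1 h2 d0; have [le|lt] := leP x y; first exact: W.
  rewrite distrC; apply: W => //; first exact: ltW.
  - by rewrite mulrC.
  - by rewrite distrC.
  - by rewrite distrC.
move=> le xy h1 h2 d0.
have cg : continuous g.
  move=> z; apply/differentiable_continuous.
  by have [+ _] := hd z; move/derivable1_diffP.
have [c hc e] := MVT_segment le (fun z _ => hd z) (continuous_subspaceT cg).
rewrite e normrM.
have K0 : 0 <= K by apply: le_trans (hK 0); rewrite normr_ge0.
move: hc; rewrite in_itv /= => /andP[xc cy].
have hcz : `|y - x| <= 2 * d * `|c|.
  have [x0|x0] := ltP 0 x.
    apply: (le_trans h1); apply: ler_wpM2l; first by rewrite mulr_ge0.
    by rewrite !gtr0_norm //; apply: lt_le_trans xc.
  have x0' : x < 0.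
    by rewrite lt_neqAle x0 andbT; apply/eqP => ex; move: xy; rewrite ex mul0r ltxx.
  have y0 : y < 0 by rewrite -(nmulr_rgt0 _ x0').
  apply: (le_trans h2); apply: ler_wpM2l; first by rewrite mulr_ge0.
  rewrite !ltr0_norm //; first by rewrite lerN2.
  exact: le_lt_trans y0.
have := ler_wpM2l (normr_ge0 (dg c)) hcz.
move=> h; apply: (le_trans h).
have := ler_wpM2l (mulr_ge0 (ler0n R 2) d0) (hK c).
rewrite normrM; move=> h'; apply: le_trans h'.
by rewrite le_eqVlt; apply/orP; left; apply/eqP; ring.
Qed.

Lemma kappa_val (R : realType) (p a b d : {poly R}) (z : R) : z != 0 -> p.[z] != 0 ->
  p = a * d -> 'X * p^`() = b * d ->
  a.[z] != 0 /\ kappa (fun x => p.[x]) z = (`|b.[z]| / `|a.[z]|)%:E.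
Proof.
move=> z0 pz hpa hqb.
have dz : d.[z] != 0.
  by apply: contraNneq pz; rewrite hpa hornerM => ->; rewrite mulr0.
have az : a.[z] != 0.
  by apply: contraNneq pz; rewrite hpa hornerM => ->; rewrite mul0r.
split => //; rewrite /kappa (negbTE z0) (negbTE pz).
change ((`|z| * `|(horner p)^`()%classic z| / `|p.[z]|)%:E = (`|b.[z]| / `|a.[z]|)%:E).
rewrite -derivE; congr (_%:E).
have e : z * p^`().[z] = b.[z] * d.[z] by rewrite -hornerM -hqb !hornerE.
rewrite -normrM e hpa hornerM !normrM; field.
by rewrite !normr_eq0 dz az.
Qed.

Arguments kappa_val {R p a b d z}.
Arguments root_a {R p y}.
Arguments mvt_rel {R g dg K d x y}.
Arguments log_close {R x y d}.
Arguments ratio_bound {R N E D}.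
Arguments g_deriv {R a b z}.
Arguments sq_pos {R x}.
Arguments sq_ge0 {R}.
Arguments norm_le_sqrt {R}.
Arguments size_N {R a} b.

Theorem mainTheorem6 (R : realType) (p : {poly R}) :
  p != 0 -> amenable [set: R] (fun x : R => p.[x]).
Proof.
move=> p0.
set q := 'X * p^`().
set d := gcdp p q.
set a := p %/ d.
set b := q %/ d.
have hpa : p = a * d by rewrite /a divpK // dvdp_gcdl.
have hqb : q = b * d by rewrite /b divpK // dvdp_gcdr.
have cab : coprimep a b by apply: coprimep_div_gcd; rewrite p0.
have a0 : a != 0 by apply: contraNneq p0 => ha; rewrite hpa ha mul0r.
set D := a * a + b * b.
have DE : forall z, D.[z] = a.[z] * a.[z] + b.[z] * b.[z] by move=> z; rewrite /D !hornerE.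
have Dpos : forall z, 0 < D.[z].
  move=> z; rewrite DE.
  have [ra|ra] := boolP (root a z).
    have bz := coprimep_root cab ra.
    have := sq_pos bz; have := sq_ge0 a.[z]; lra.
  have := sq_pos ra; have := sq_ge0 b.[z]; lra.
set E := if (size b <= size a)%N then a * a else b * b.
set N := 'X * (a^`() * b - a * b^`()).
have hED : forall z, 0 <= E.[z] <= D.[z].
  move=> z; rewrite /E DE; case: ifP => _; rewrite !hornerE;
  have := sq_ge0 a.[z]; have := sq_ge0 b.[z]; move=> ? ?; apply/andP; split; lra.
have [K [K0 hK]] := ratio_bound hED Dpos (size_N b a0).
set g := fun t => a.[t] * (Num.sqrt D.[t])^-1.
set dg := fun z => b.[z] * (a^`() * b - a * b^`()).[z] / (Num.sqrt D.[z]) ^+ 3.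
have hg : forall z : R, is_derive z 1 g (dg z) by move=> z; exact: g_deriv (Dpos z).
have sfacts : forall z, 0 < Num.sqrt D.[z] /\ Num.sqrt D.[z] ^+ 2 = D.[z] /\
    `|a.[z]| <= Num.sqrt D.[z] /\ `|b.[z]| <= Num.sqrt D.[z].
  move=> z; split; first by rewrite sqrtr_gt0.
  split; first by rewrite sqr_sqrtr // ltW.
  rewrite DE; split; first exact: norm_le_sqrt.
  by rewrite addrC; exact: norm_le_sqrt.
have hdg : forall z, `|z * dg z| <= K.
  move=> z; have [s0 [s2 [sa sb]]] := sfacts z.
  set s := Num.sqrt D.[z] in s0 s2 sa sb *.
  have eq : z * dg z = b.[z] * N.[z] / s ^+ 3.
    by rewrite /dg /N -/s hornerM hornerX; field; rewrite lt0r_neq0.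
  rewrite eq normf_div normrM (ger0_norm (ltW (exprn_gt0 3 s0))).
  rewrite ler_pdivrMr ?exprn_gt0 //.
  have := ler_pM (normr_ge0 _) (normr_ge0 _) sb (hK z).
  move=> h; apply: (le_trans h); rewrite -s2; rewrite le_eqVlt; apply/orP; left.
  by apply/eqP; ring.
have glow : forall z, a.[z] != 0 -> 1 / (1 + `|b.[z]| / `|a.[z]|) <= `|g z|.
  move=> z az; have [s0 [s2 [sa sb]]] := sfacts z.
  have a0' : 0 < `|a.[z]| by rewrite normr_gt0.
  have sab : Num.sqrt D.[z] <= `|a.[z]| + `|b.[z]|.
    rewrite -(ger0_norm (addr_ge0 (normr_ge0 a.[z]) (normr_ge0 b.[z]))) -sqrtr_sqr.
    apply: ler_wsqrtr; rewrite DE.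
    have e1 : a.[z] * a.[z] = `|a.[z]| ^+ 2 by rewrite real_normK ?num_real // expr2.
    have e2 : b.[z] * b.[z] = `|b.[z]| ^+ 2 by rewrite real_normK ?num_real // expr2.
    rewrite e1 e2 sqrrD; have := mulr_ge0 (normr_ge0 a.[z]) (normr_ge0 b.[z]); lra.
  rewrite /g normrM normfV (gtr0_norm s0).
  have -> : 1 / (1 + `|b.[z]| / `|a.[z]|) = `|a.[z]| / (`|a.[z]| + `|b.[z]|).
    by field; rewrite ?gt_eqF //; apply: ltr_wpDr => //.
  rewrite ler_pdivrMr; last by apply: ltr_wpDr.
  rewrite mulrAC ler_pdivlMr // ler_pM2l //.
have gup : forall z, a.[z] != 0 -> 1 + `|b.[z]| / `|a.[z]| <= 2 / `|g z|.
  move=> z az; have [s0 [s2 [sa sb]]] := sfacts z.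
  have a0' : 0 < `|a.[z]| by rewrite normr_gt0.
  rewrite /g normrM normfV (gtr0_norm s0).
  have -> : 2 / (`|a.[z]| * (Num.sqrt D.[z])^-1) = 2 * Num.sqrt D.[z] / `|a.[z]|.
    by field; rewrite ?gt_eqF.
  have -> : 1 + `|b.[z]| / `|a.[z]| = (`|a.[z]| + `|b.[z]|) / `|a.[z]|.
    by field; rewrite gt_eqF.
  rewrite ler_pM2r ?invr_gt0 //; lra.
exists (4 * K + 4); split; first lra.
move=> x _ kx /=; split; first by [].
move=> y hy.
have [x0|x0] := eqVneq x 0.
  move: hy; rewrite x0 /reldist eqxx andbT mulr0 ltxx.
  case: eqP => [-> _|_]; last by rewrite ltNge leey.
  rewrite /mu /kappa eqxx adde0 mule1 lee_fin; lra.
have px : p.[x] != 0.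
  by move: kx; rewrite /kappa (negbTE x0); case: eqP => // _; rewrite ltxx.
have [ax kxv] := kappa_val x0 px hpa hqb.
set mx := 1 + `|b.[x]| / `|a.[x]|.
have muxE : mu (fun x => p.[x]) x = mx%:E by rewrite /mu kxv.
rewrite muxE /= in hy; rewrite muxE.
have mx1 : 1 <= mx by rewrite lerDl divr_ge0.
move: hy; rewrite /reldist (negbTE x0) andbF.
case: ifP => yx; last by rewrite ltNge leey.
rewrite lte_fin => hy.
have C4 : 4 <= (4 * K + 4) * mx.
  have : 4 * K + 4 <= (4 * K + 4) * mx by rewrite ler_peMr //; lra.
  lra.
set dl := 1 / ((4 * K + 4) * mx).
have dl0 : 0 < dl by rewrite /dl divr_gt0 //; lra.
have dl12 : dl <= 1 / 2.
  rewrite /dl ler_pdivrMr; last lra.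
  rewrite mulrC mulrA ler_pdivlMr //; lra.
have xy : 0 < x * y by rewrite mulrC.
have [h1 h2] := log_close xy hy dl12.
have hgd := mvt_rel hg hdg xy h1 h2 (ltW dl0).
have gxl := glow x ax.
have mx0 : 0 < mx by lra.
have hK2 : 2 * dl * K <= 1 / (2 * mx).
  have e : 2 * dl * K = (2 * K / (4 * K + 4)) * (1 / mx).
    by rewrite /dl; field; apply/andP; split; rewrite gt_eqF //; lra.
  have e' : 1 / (2 * mx) = (1 / 2) * (1 / mx) by field; rewrite gt_eqF.
  rewrite e e'; apply: ler_wpM2r; first by rewrite divr_ge0 // ltW.
  rewrite ler_pdivrMr; lra.
have e2 : 1 / (2 * mx) = (1 / mx) / 2 by field; rewrite gt_eqF.
have gyl : 1 / (2 * mx) <= `|g y|.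
  have := lerB_dist (g x) (g y); rewrite distrC => hb.
  have hgd' : `|g y - g x| <= 2 * dl * K := hgd.
  have gxl' : 1 / mx <= `|g x| := gxl.
  clear hgd gxl; clearbody dl mx.
  rewrite e2; lra.
have y0 : y != 0 by apply/eqP => ey; move: yx; rewrite ey mul0r ltxx.
have gy0 : 0 < `|g y|.
  apply: lt_le_trans gyl; rewrite divr_gt0 //; lra.
have ay : a.[y] != 0 by apply/eqP => ey; move: gy0; rewrite /g ey mul0r normr0 ltxx.
have py : p.[y] != 0.
  apply/negP => rp; have h : root a y := root_a p0 y0 rp.
  by rewrite /root (negbTE ay) in h.
have [_ kyv] := kappa_val y0 py hpa hqb.
rewrite /mu kyv -EFinD -EFinM lee_fin.
apply: le_trans (gup y ay) _.
have h4 : 2 / `|g y| <= 4 * mx.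
  rewrite ler_pdivrMr //.
  have := ler_wpM2l (ltW (mulr_gt0 (ltr0n R 4) mx0)) gyl.
  have -> : 4 * mx * (1 / (2 * mx)) = 2 by field; rewrite gt_eqF.
  by move=> h; apply: (le_trans h); rewrite le_eqVlt; apply/orP; left; apply/eqP; ring.
apply: (le_trans h4); apply: ler_wpM2r; first exact: ltW.
lra.
Qed.
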